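(* Let $G$ be a connected finite simple graph on the vertex set $\{1,\ldots,d\}$ with $d\ge 2$. Then the symmetric edge polytope $\mathcal{P}^{\pm}_G$, regarded as a Fano polytope in $\mathbb{R}^{d-1}$ via the identification $\phi:\mathbb{R}^{d-1}\to\mathcal{H}$, cannot split if and only if $G$ is 2-connected.
   Context: For an edge $e=\{i,j\}$ set $\sigma(e)=\mathbf{e}_i-\mathbf{e}_j\in\mathbb{R}^d$; $\mathcal{P}^{\pm}_G$ is the convex hull of $\{\pm\sigma(e): e\in E(G)\}$. It lies in $\mathcal{H}=\{x: x_1+\cdots+x_d=0\}$, identified with $\mathbb{R}^{d-1}$ via $\phi(y_1,\ldots,y_{d-1})=(y_1,\ldots,y_{d-1},-(y_1+\cdots+y_{d-1}))$; it is then a Fano polytope (a full-dimensional integral polytope whose only interior lattice point is the origin). A Fano polytope $\mathcal{P}\subset\mathbb{R}^D$ splits if, after a unimodular change of lattice coordinates (an element of $GL_D(\mathbb{Z})$, e.g. a renumbering of coordinates), there are $D_1,D_2\ge1$ with $D_1+D_2=D$ and Fano polytopes $\mathcal{P}_1\subset\mathbb{R}^{D_1}$, $\mathcal{P}_2\subset\mathbb{R}^{D_2}$ such that $\mathcal{P}=\operatorname{conv}(\{(a,\mathbf{0}):a\in\mathcal{P}_1\}\cup\{(\mathbf{0},b):b\in\mathcal{P}_2\})$. A connected graph $G$ is 2-connected if for every vertex $i$ the induced subgraph on $V(G)\setminus\{i\}$ is connected. *)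

(* Defs.v *)
From HB Require Import structures.
From mathcomp Require Import all_boot all_order all_algebra.
From mathcomp Require Import reals.
Set Implicit Arguments. Unset Strict Implicit. Unset Printing Implicit Defensive.
Import Order.TTheory GRing.Theory Num.Theory.
Local Open Scope ring_scope.

Section Defs.
Variable R : realType.

Definition convhull n (A : 'rV[R]_n -> Prop) : 'rV[R]_n -> Prop :=
  fun x => exists (k : nat) (p : 'I_k -> 'rV[R]_n) (w : 'I_k -> R),
    (forall i, A (p i)) /\ (forall i, 0 <= w i) /\ (\sum_i w i = 1) /\
    x = \sum_i w i *: p i.

Definition lattice_pt n (x : 'rV[R]_n) : Prop := forall i, exists z : int, x 0 i = z%:~R.

(* topological interior (w.r.t. the sup-norm, i.e. the usual topology of R^n) *)
Definition interior_pt n (P : 'rV[R]_n -> Prop) (x : 'rV[R]_n) : Prop :=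
  exists2 eps : R, 0 < eps & forall y : 'rV[R]_n, (forall i, `|y 0 i - x 0 i| < eps) -> P y.

Definition integral_polytope n (P : 'rV[R]_n -> Prop) : Prop :=
  exists s : seq 'rV[R]_n, (forall v, v \in s -> lattice_pt v) /\
    (forall x, P x <-> convhull (fun v => v \in s) x).

Definition fano n (P : 'rV[R]_n -> Prop) : Prop :=
  integral_polytope P /\ (exists x, interior_pt P x) /\
  (forall x, lattice_pt x -> (interior_pt P x <-> x = 0)).

(* unimodular change of lattice coordinates: x |-> x *m U with U in GL_n(Z) *)
Definition unimodular n (U : 'M[int]_n) : Prop := `|\det U| = 1.

Definition splits n (P : 'rV[R]_n -> Prop) : Prop :=
  exists (U : 'M[int]_n) (n1 n2 : nat) (e : (n1 + n2)%N = n)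
         (P1 : 'rV[R]_n1 -> Prop) (P2 : 'rV[R]_n2 -> Prop),
    unimodular U /\ (0 < n1)%N /\ (0 < n2)%N /\ fano P1 /\ fano P2 /\
    (forall y, (exists2 x, P x & y = x *m map_mx intr U) <->
       convhull (fun z => (exists2 a, P1 a & z = castmx (erefl 1%N, e) (row_mx a 0)) \/
                          (exists2 b, P2 b & z = castmx (erefl 1%N, e) (row_mx 0 b))) y).

Definition sigma d (i j : 'I_d) : 'rV[R]_d := delta_mx 0 i - delta_mx 0 j.

(* k-th coordinate of y (0 if out of range) *)
Definition coord_nat n (y : 'rV[R]_n) (k : nat) : R :=
  if insub k is Some j then y 0 j else 0.

Definition phi d (y : 'rV[R]_d.-1) : 'rV[R]_d :=
  \row_(i < d) (if (i < d.-1)%N then coord_nat y i else - \sum_j y 0 j).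

Definition sym_edge_polytope d (E : rel 'I_d) : 'rV[R]_d -> Prop :=
  convhull (fun x => exists i j, E i j /\ (x = sigma i j \/ x = - sigma i j)).

Definition sym_edge_polytope_H d (E : rel 'I_d) : 'rV[R]_d.-1 -> Prop :=
  fun y => sym_edge_polytope E (phi y).

End Defs.

(* finite simple graphs on {1..d} = 'I_d : symmetric irreflexive relations *)
Definition simple_graph d (E : rel 'I_d) : Prop := symmetric E /\ irreflexive E.

Definition connected_graph d (E : rel 'I_d) : Prop := forall i j, connect E i j.

Definition delete_vertex d (E : rel 'I_d) (v : 'I_d) : rel 'I_d :=
  fun a b => [&& E a b, a != v & b != v].

Definition two_connected d (E : rel 'I_d) : Prop :=
  connected_graph E /\
  forall v i j, i != v -> j != v -> connect (delete_vertex E v) i j.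

(* Main.v *)
Require Import Defs.
From HB Require Import structures.
From mathcomp Require Import all_boot all_order all_algebra.
From mathcomp Require Import reals ring lra.
From Stdlib Require Import Classical.
Set Implicit Arguments. Unset Strict Implicit. Unset Printing Implicit Defensive.
Import Order.TTheory GRing.Theory Num.Theory.
Local Open Scope ring_scope.

Lemma split_lsh m n (a : 'I_m) : split (lshift n a) = inl a.
Proof. by rewrite -[lshift n a]/(unsplit (inl a)) unsplitK. Qed.
Lemma split_rsh m n (a : 'I_n) : split (rshift m a) = inr a.
Proof. by rewrite -[rshift m a]/(unsplit (inr a)) unsplitK. Qed.

Lemma match_lsh T m n (f : 'I_m -> T) (g : 'I_n -> T) a :
  match split (lshift n a) with inl x => f x | inr y => g y end = f a.
Proof. by rewrite split_lsh. Qed.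
Lemma match_rsh T m n (f : 'I_m -> T) (g : 'I_n -> T) a :
  match split (rshift m a) with inl x => f x | inr y => g y end = g a.
Proof. by rewrite split_rsh. Qed.

Section Conv.
Variable R : realType.
Implicit Types (n : nat).

Lemma convhull_sub n (A B : 'rV[R]_n -> Prop) x :
  (forall y, A y -> B y) -> convhull A x -> convhull B x.
Proof. move=> AB [k [p [w [Ap [w0 [w1 ->]]]]]]; exists k, p, w; split => //; by move=> i; apply: AB. Qed.

Lemma convhull_in n (A : 'rV[R]_n -> Prop) x : A x -> convhull A x.
Proof.
move=> Ax; exists 1%N, (fun _ => x), (fun _ => 1); split => //; split => //; split.
  by rewrite big_ord1.
by rewrite big_ord1 scale1r.
Qed.

Lemma convhull_conv2 n (A : 'rV[R]_n -> Prop) x y t :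
  0 <= t <= 1 -> convhull A x -> convhull A y -> convhull A (t *: x + (1 - t) *: y).
Proof.
move=> /andP[t0 t1] [k1 [p1 [w1 [A1 [w10 [w11 ->]]]]]] [k2 [p2 [w2 [A2 [w20 [w21 ->]]]]]].
exists (k1 + k2)%N, (fun i => match split i with inl a => p1 a | inr b => p2 b end),
  (fun i => match split i with inl a => t * w1 a | inr b => (1 - t) * w2 b end).
split; first by move=> i; case: (split i).
split; first by move=> i; case: (split i) => a; apply: mulr_ge0 => //; rewrite subr_ge0.
split.
  rewrite big_split_ord /=.
  rewrite (eq_bigr (fun i => t * w1 i)); last by move=> i _; exact: (match_lsh (fun a => t * w1 a) (fun b => (1-t)*w2 b)).
  rewrite [X in _ + X](eq_bigr (fun i => (1 - t) * w2 i)); last by move=> i _; exact: (match_rsh (fun a => t * w1 a) (fun b => (1-t)*w2 b)).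
  by rewrite -!mulr_sumr w11 w21 !mulr1 addrC subrK.
rewrite big_split_ord /=.
rewrite [X in _ = X + _](eq_bigr (fun i => (t * w1 i) *: p1 i)); last first.
  by move=> i _; congr (_ *: _); try exact: (match_lsh (fun a => t * w1 a) (fun b => (1-t)*w2 b)); exact: (match_lsh p1 p2).
rewrite [X in _ = _ + X](eq_bigr (fun i => ((1 - t) * w2 i) *: p2 i)); last first.
  by move=> i _; congr (_ *: _); try exact: (match_rsh (fun a => t * w1 a) (fun b => (1-t)*w2 b)); exact: (match_rsh p1 p2).
by rewrite !scaler_sumr; congr (_ + _); apply: eq_bigr => i _; rewrite scalerA.
Qed.

Lemma convhull_convex n (C : 'rV[R]_n -> Prop) :
  (forall x y t, 0 <= t <= 1 -> C x -> C y -> C (t *: x + (1 - t) *: y)) ->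
  forall x, convhull C x -> C x.
Proof.
move=> Cc x [k [p [w [Cp [w0 [w1 ->]]]]]]; elim: k p w Cp w0 w1 => [|k IH] p w Cp w0 w1.
  by move: w1; rewrite big_ord0 => /eqP; rewrite eq_sym oner_eq0.
rewrite big_ord_recr /=; move: w1; rewrite big_ord_recr /= => w1.
set W := \sum_(i < k) w (widen_ord (leqnSn k) i) in w1 *.
have W0 : 0 <= W by apply: sumr_ge0 => i _.
have wm : w ord_max = 1 - W by rewrite -w1 addrC addrK.
have [W00|Wn0] := eqVneq W 0.
  have z : forall i : 'I_k, w (widen_ord (leqnSn k) i) = 0.
    by move=> i; apply: (psumr_eq0P (P := xpredT) (fun i _ => w0 _) W00).
  rewrite big1 ?add0r; last by move=> i _; rewrite z scale0r.
  by rewrite wm W00 subr0 scale1r.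
have Wp : 0 < W by rewrite lt_def Wn0 W0.
have Cq := IH (fun i => p (widen_ord (leqnSn k) i)) (fun i => w (widen_ord (leqnSn k) i) / W)
  (fun i => Cp _) (fun i => divr_ge0 (w0 _) W0).
have -> : \sum_(i < k) w (widen_ord (leqnSn k) i) *: p (widen_ord (leqnSn k) i) =
   W *: \sum_(i < k) (w (widen_ord (leqnSn k) i) / W) *: p (widen_ord (leqnSn k) i).
  rewrite scaler_sumr; apply: eq_bigr => i _; rewrite scalerA mulrCA mulrV ?mulr1 //.
  by rewrite unitfE.
rewrite wm; apply: Cc; first by rewrite W0 -subr_ge0 -wm w0.
  by apply: Cq; rewrite -mulr_suml mulrV // unitfE.
exact: Cp.
Qed.
End Conv.


Section Conv2.
Variable R : realType.

Definition linM n m (f : 'rV[R]_n -> 'rV[R]_m) :=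
  forall a x y, f (a *: x + y) = a *: f x + f y.
Definition linF n (l : 'rV[R]_n -> R) :=
  forall a x y, l (a *: x + y) = a * l x + l y.

Lemma linmap0 n m f : @linM n m f -> f 0 = 0.
Proof. by move=> fl; have := fl (-1) 0 0; rewrite !scaleN1r oppr0 addr0 addNr. Qed.
Lemma linfun0 n l : @linF n l -> l 0 = 0.
Proof. by move=> fl; have := fl (-1) 0 0; rewrite scaleN1r mulN1r oppr0 addr0 addNr. Qed.

Lemma linM_sum n m f k (w : 'I_k -> R) p : @linM n m f ->
  f (\sum_i w i *: p i) = \sum_i w i *: f (p i).
Proof.
move=> fl; have f0 := linmap0 fl.
have fD : forall x y, f (x + y) = f x + f y.
  by move=> x y; have := fl 1 x y; rewrite !scale1r.
rewrite (big_morph f fD f0); apply: eq_bigr => i _.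
by rewrite -[w i *: p i]addr0 fl f0 addr0.
Qed.

Lemma linF_sum n l k (w : 'I_k -> R) p : @linF n l ->
  l (\sum_i w i *: p i) = \sum_i w i * l (p i).
Proof.
move=> fl; have f0 := linfun0 fl.
have fD : forall x y, l (x + y) = l x + l y.
  by move=> x y; have := fl 1 x y; rewrite scale1r mul1r.
rewrite (big_morph l fD f0); apply: eq_bigr => i _.
by rewrite -[w i *: p i]addr0 fl f0 addr0.
Qed.

Lemma convhull_lin n m f (A : 'rV[R]_n -> Prop) x : @linM n m f ->
  convhull A x -> convhull (fun z => exists2 y, A y & z = f y) (f x).
Proof.
move=> fl [k [p [w [Ap [w0 [w1 ->]]]]]]; exists k, (fun i => f (p i)), w.
split; first by move=> i; exists (p i).
by split => //; split => //; rewrite linM_sum.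
Qed.

Lemma conv_le n (A : 'rV[R]_n -> Prop) l M x : linF l ->
  (forall g, A g -> l g <= M) -> convhull A x -> l x <= M.
Proof.
move=> fl lA [k [p [w [Ap [w0 [w1 ->]]]]]]; rewrite linF_sum //.
rewrite -[M]mul1r -w1 mulr_suml; apply: ler_sum => i _.
by apply: ler_wpM2l => //; apply: lA.
Qed.

Lemma conv_eq n (A : 'rV[R]_n -> Prop) l M x g0 : linF l ->
  (forall g, A g -> l g <= M) -> (forall g, A g -> l g = M -> g = g0) ->
  convhull A x -> l x = M -> x = g0.
Proof.
move=> fl lA lE [k [p [w [Ap [w0 [w1 ->]]]]]]; rewrite linF_sum // => lx.
have h : \sum_i w i * (M - l (p i)) = 0.
  by rewrite (eq_bigr (fun i => w i * M - w i * l (p i))) => [|i _]; rewrite ?mulrBr //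
    sumrB -mulr_suml w1 mul1r lx subrr.
have z : forall i, w i * (M - l (p i)) = 0.
  move=> i; apply: (psumr_eq0P (P := xpredT) _ h) => // j _.
  by apply: mulr_ge0 => //; rewrite subr_ge0 lA.
rewrite -[g0]scale1r -w1 scaler_suml; apply: eq_bigr => i _.
have := z i; move/eqP; rewrite mulf_eq0 => /orP[/eqP->|]; first by rewrite !scale0r.
by rewrite subr_eq0 => /eqP/esym/(lE _ (Ap i)) ->.
Qed.

Lemma convhull_conv n (A : 'rV[R]_n -> Prop) x : convhull (convhull A) x -> convhull A x.
Proof. by apply: convhull_convex => y z t ht; apply: convhull_conv2. Qed.

End Conv2.


Lemma connect_ind (T : finType) (e : rel T) (P : T -> T -> Prop) :
  (forall x, P x x) -> (forall x y z, e x y -> P y z -> P x z) ->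
  forall x z, connect e x z -> P x z.
Proof.
move=> Pr Ps x z /connectP[p]; elim: p x => [|y p IH] x /=; first by move=> _ ->.
by move=> /andP[exy py] zl; apply: Ps exy (IH _ py zl).
Qed.

Lemma connect_edge (T : finType) (e : rel T) x y : connect e x y -> x != y ->
  exists a b, e a b.
Proof.
move=> /connectP[[|a p] /=]; first by move=> _ ->; rewrite eqxx.
by move=> /andP[h _] _ _; exists x, a.
Qed.

Section Fano.
Variable R : realType.
Variables (m : nat) (T : finType) (F : rel T) (b : T -> 'rV[R]_m).

Definition gens (g : 'rV[R]_m) := exists u w, F u w /\ g = b u - b w.
Definition gpoly := convhull gens.

Hypothesis Fsym : symmetric F.
Hypothesis b01 : forall u k, b u 0 k = 0 \/ b u 0 k = 1.
Hypothesis bspan : forall k, exists u c, b u - b c = delta_mx 0 k /\ connect F u c.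
Hypothesis m0 : (0 < m)%N.

Lemma gens_bound g k : gens g -> `|g 0 k| <= 1.
Proof.
move=> [u [w [_ ->]]]; rewrite !mxE.
by case: (b01 u k) => ->; case: (b01 w k) => ->; rewrite ?subrr ?subr0 ?sub0r ?normrN ?normr0 ?normr1.
Qed.

Lemma gpoly_bound x k : gpoly x -> `|x 0 k| <= 1.
Proof.
move=> hx; rewrite ler_norml; apply/andP; split.
  rewrite lerNl; apply: (conv_le (l := fun y => - y 0 k)) hx.
    by move=> a y z; rewrite !mxE mulrN opprD.
  by move=> g /(gens_bound k); rewrite ler_norml => /andP[]; rewrite lerNl.
apply: (conv_le (l := fun y => y 0 k)) hx; first by move=> a y z; rewrite !mxE.
by move=> g /(gens_bound k); rewrite ler_norml => /andP[].
Qed.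

Lemma gpoly_sym x : gpoly x -> gpoly (- x).
Proof.
move=> hx; have fl : linM (fun y : 'rV[R]_m => - y).
  by move=> a y z; rewrite opprD scalerN.
have h := convhull_lin fl hx.
apply: (convhull_sub _ h) => z [y [u [w [Fuw ->]]] ->].
by exists w, u; split; [rewrite Fsym | rewrite opprB].
Qed.

Lemma gpoly_conv x y t : 0 <= t <= 1 -> gpoly x -> gpoly y -> gpoly (t *: x + (1 - t) *: y).
Proof. exact: convhull_conv2. Qed.

Lemma gpoly_0 : gpoly 0.
Proof.
have [u [c [h1 h2]]] := bspan (Ordinal m0).
have [a [a' Faa]] : exists a b, F a b.
  have uc : u != c.
    apply/eqP => uc; move: h1; rewrite uc subrr => /matrixP/(_ 0 (Ordinal m0)).
    by rewrite !mxE !eqxx /= => /eqP; rewrite eq_sym oner_eq0.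
  exact: (connect_edge h2 uc).
have g : gpoly (b a - b a') by apply: convhull_in; exists a, a'.
have := gpoly_conv (t := 2^-1) _ g (gpoly_sym g).
have -> : 1 - 2^-1 = 2^-1 :> R by field.
rewrite scalerN subrr; apply; apply/andP; split; lra.
Qed.

End Fano.

Section Fano2.
Variable R : realType.
Variables (m : nat) (T : finType) (F : rel T) (b : T -> 'rV[R]_m).
Hypothesis Fsym : symmetric F.
Hypothesis b01 : forall u k, b u 0 k = 0 \/ b u 0 k = 1.
Hypothesis bspan : forall k, exists u c, b u - b c = delta_mx 0 k /\ connect F u c.
Hypothesis m0 : (0 < m)%N.

Let Q := gpoly F b.

Lemma gpoly_path u c : connect F u c -> exists N : nat, Q ((N.+1%:R)^-1 *: (b u - b c)).
Proof.
move: u c; apply: connect_ind.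
  by move=> x; exists 0%N; rewrite subrr scaler0; apply: gpoly_0.
move=> x y z Fxy [N hN]; exists N.+1.
have g : Q (b x - b y) by apply: convhull_in; exists x, y.
set s : R := (N.+2)%:R.
have s0 : 0 < s by rewrite ltr0n.
have hs : (N.+1)%:R = s - 1 by rewrite /s -[N.+2]addn1 natrD addrK.
have := gpoly_conv (t := s^-1) _ g hN; rewrite hs.
rewrite scalerA (_ : (1 - s^-1) * (s - 1)^-1 = s^-1); last first.
  have s1 : s - 1 != 0 by rewrite -hs pnatr_eq0.
  field; have hN0 : 0 <= N%:R :> R := ler0n _ _; apply/andP; split; apply/eqP; lra.
rewrite -scalerDr addrA subrK; apply; apply/andP; split.
  by rewrite invr_ge0 ltW.
by rewrite invr_le1 ?unitfE ?gt_eqF // /s ler1n.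
Qed.

Lemma gpoly_scale v t s : 0 < t -> Q (t *: v) -> `|s| <= t -> Q (s *: v).
Proof.
move=> t0 hv hs.
have pos : forall s, 0 <= s -> s <= t -> Q (s *: v).
  move=> s' s0 st; have := gpoly_conv (t := s' / t) _ hv (gpoly_0 Fsym bspan m0).
  rewrite scaler0 addr0 scalerA mulrVK ?unitfE ?gt_eqF //; apply; apply/andP; split.
    by rewrite divr_ge0 // ltW.
  by rewrite ler_pdivrMr // mul1r.
have [s0|s0] := leP 0 s; first by apply: pos => //; rewrite -(ger0_norm s0).
rewrite -[s]opprK scaleNr; apply: gpoly_sym => //; apply: pos.
  by rewrite oppr_ge0 ltW.
by rewrite -(ltr0_norm s0).
Qed.

Lemma gpoly_unif : exists2 t, 0 < t & forall k, Q (t *: delta_mx 0 k).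
Proof.
suff : forall l : seq 'I_m, exists2 t, 0 < t & forall k, k \in l -> Q (t *: delta_mx 0 k).
  move=> /(_ (enum 'I_m)) [t t0 ht]; exists t => // k; apply: ht; by rewrite mem_enum.
elim=> [|k l [t t0 ht]]; first by exists 1.
have [u [c [h1 h2]]] := bspan k.
have [N hN] := gpoly_path h2; rewrite h1 in hN.
set t' : R := (N.+1%:R)^-1 in hN.
have t'0 : 0 < t' by rewrite invr_gt0 ltr0n.
exists (Num.min t t'); first by rewrite lt_min t0 t'0.
move=> j; rewrite in_cons => /orP[/eqP->|jl].
  apply: (gpoly_scale t'0 hN); rewrite ger0_norm ?ge_min ?lexx ?orbT //.
  by rewrite le_min ltW // ltW.
apply: (gpoly_scale t0 (ht _ jl)); rewrite ger0_norm ?ge_min ?lexx //.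
by rewrite le_min ltW // ltW.
Qed.

Lemma gpoly_interior0 : interior_pt Q 0.
Proof.
have [t t0 ht] := gpoly_unif.
have m0' : (0 < m%:R :> R) by rewrite ltr0n.
exists (t / m%:R); first by rewrite divr_gt0.
move=> y hy; rewrite (row_sum_delta y).
have -> : \sum_(j < m) y 0 j *: delta_mx (0 : 'I_1) j =
   \sum_(j < m) (m%:R)^-1 *: ((m%:R * y 0 j) *: delta_mx (0 : 'I_1) j).
  by apply: eq_bigr => j _; rewrite scalerA mulrA mulVf ?mul1r // gt_eqF.
apply: convhull_conv; exists m, (fun j => (m%:R * y 0 j) *: delta_mx (0 : 'I_1) j), (fun _ => (m%:R)^-1).
split; last split; last split => //.
- move=> j; apply: (gpoly_scale t0 (ht j)).
  have := hy j; rewrite mxE subr0 => /ltW; rewrite normrM ger0_norm ?ler0n //.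
  by rewrite ler_pdivlMr // mulrC.
- by move=> j; rewrite invr_ge0 ler0n.
- by rewrite sumr_const card_ord -[_ *+ _]mulr_natr mulVf // gt_eqF.
Qed.

End Fano2.

Section Fano3.
Variable R : realType.
Variables (m : nat) (T : finType) (F : rel T) (b : T -> 'rV[R]_m).
Hypothesis Fsym : symmetric F.
Hypothesis b01 : forall u k, b u 0 k = 0 \/ b u 0 k = 1.
Hypothesis bspan : forall k, exists u c, b u - b c = delta_mx 0 k /\ connect F u c.
Hypothesis m0 : (0 < m)%N.

Lemma gpoly_fano : fano (gpoly F b).
Proof.
have I0 := gpoly_interior0 Fsym bspan m0.
split; [|split; [by exists 0|]].
  exists [seq b p.1 - b p.2 | p <- enum [pred p : T * T | F p.1 p.2]]; split.
    move=> v /mapP[[u w] _ ->] k; rewrite !mxE.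
    case: (b01 u k) => ->; case: (b01 w k) => ->.
    - by exists 0; rewrite subrr.
    - by exists (-1); rewrite sub0r.
    - by exists 1; rewrite subr0.
    - by exists 0; rewrite subrr.
  move=> x; split; apply: convhull_sub.
    by move=> g [u [w [Fuw ->]]]; apply/mapP; exists (u, w) => //; rewrite mem_enum.
  by move=> g /mapP[[u w]]; rewrite mem_enum => Fuw ->; exists u, w.
move=> x lx; split; last by move->.
move=> [eps e0 hb].
have Qx : gpoly F b x by apply: hb => i; rewrite subrr normr0.
apply/eqP; apply/negPn/negP => /matrix0Pn [i [k]]; rewrite (ord1 i) => xk.
have [z hz] := lx k.
have x1 : 1 <= `|x 0 k|.
  by rewrite hz; apply: norm_intr_ge1; [exact: intr_int | rewrite -hz].
have xb := gpoly_bound b01 k Qx.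
set y := x + (eps / 2 * x 0 k) *: delta_mx 0 k.
have Qy : gpoly F b y.
  apply: hb => j; rewrite /y !mxE addrAC subrr add0r normrM normrM.
  have hc : `|(((0 : 'I_1) == 0) && (j == k))%:R| <= 1 :> R.
    by case: (j == k); rewrite ?normr1 ?normr0.
  have he : `|eps / 2| = eps / 2 by rewrite ger0_norm //; lra.
  rewrite he; move: hc xb; set a := `|x 0 k|; set c := `|_%:R|.
  have a0 : 0 <= a by apply: normr_ge0.
  have c0 : 0 <= c by apply: normr_ge0.
  move=> hc xb; have ac : a * c <= 1 by rewrite -[1]mulr1; apply: ler_pM.
  rewrite -mulrA; apply: (le_lt_trans (y := eps / 2)); last lra.
  by rewrite -[X in _ <= X]mulr1; apply: ler_wpM2l => //; lra.
have := gpoly_bound b01 k Qy; rewrite /y !mxE !eqxx /= mulr1.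
have -> : x 0 k + eps / 2 * x 0 k = x 0 k * (1 + eps / 2) by ring.
rewrite normrM => h.
have : `|1 + eps / 2| = 1 + eps / 2 by rewrite ger0_norm //; lra.
move=> h2; rewrite h2 in h.
have : 1 < `|x 0 k| * (1 + eps / 2).
  have h3 : 0 <= (`|x 0 k| - 1) * (1 + eps / 2) by apply: mulr_ge0; lra.
  lra.

lra.
Qed.

End Fano3.


Section Basics.
Variable R : realType.
Variable n : nat.
Local Notation phi1 := (@phi R n.+1).

Definition pi_ (w : 'rV[R]_n.+1) : 'rV[R]_n := \row_k w 0 (widen_ord (leqnSn n) k).

Lemma coord_natE (y : 'rV[R]_n) (k : 'I_n) : coord_nat y k = y 0 k.
Proof. by rewrite /coord_nat valK. Qed.

Lemma phiK (y : 'rV[R]_n) : pi_ (phi1 y) = y.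
Proof. by apply/rowP => k; rewrite !mxE /= ltn_ord coord_natE. Qed.

Lemma sum_recr (w : 'rV[R]_n.+1) :
  \sum_u w 0 u = \sum_(j < n) w 0 (widen_ord (leqnSn n) j) + w 0 ord_max.
Proof. by rewrite big_ord_recr. Qed.

Lemma phi_sum (y : 'rV[R]_n) : \sum_u phi1 y 0 u = 0.
Proof.
rewrite sum_recr mxE /= ltnn.
rewrite (eq_bigr (fun j => y 0 j)); first by rewrite subrr.
by move=> j _; rewrite mxE /= ltn_ord coord_natE.
Qed.

Lemma piK (w : 'rV[R]_n.+1) : \sum_u w 0 u = 0 -> phi1 (pi_ w) = w.
Proof.
rewrite sum_recr => h; apply/rowP => i; rewrite mxE.
case: ifP => hi.
  rewrite /coord_nat insubT mxE; congr (w 0 _); exact: val_inj.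
have iE : i = ord_max by apply: val_inj => /=; move: (ltn_ord i); rewrite ltnS leq_eqVlt hi orbF => /eqP.
rewrite iE; move: h; rewrite addrC => /eqP; rewrite addr_eq0 => /eqP ->; congr (- _).
by apply: eq_bigr => j _; rewrite mxE.
Qed.

Lemma phi_lin : linM phi1.
Proof.
move=> a x y; apply/rowP => i; rewrite !mxE; case: ifP => hi.
  by rewrite /coord_nat; case: insub => [j|]; rewrite ?mxE // mulr0 addr0.
rewrite (eq_bigr (fun j => a * x 0 j + y 0 j)); last by move=> j _; rewrite !mxE.
by rewrite big_split /= -mulr_sumr opprD mulrN.
Qed.

Lemma pi_lin : linM pi_.
Proof. by move=> a x y; apply/rowP => k; rewrite !mxE. Qed.

Lemma delta_sum (i : 'I_n.+1) : \sum_u (delta_mx 0 i : 'rV[R]_n.+1) 0 u = 1.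
Proof.
rewrite (bigD1 i) //= big1 ?addr0; first by rewrite mxE !eqxx.
by move=> u /negbTE hu; rewrite mxE hu andbF.
Qed.

Lemma sigma_sum (i j : 'I_n.+1) : \sum_u (sigma R i j) 0 u = 0.
Proof.
rewrite (eq_bigr (fun u => (delta_mx 0 i : 'rV[R]_n.+1) 0 u - (delta_mx 0 j : 'rV[R]_n.+1) 0 u)).
  by rewrite sumrB !delta_sum subrr.
by move=> u _; rewrite !mxE.
Qed.

End Basics.

Section Ell.
Variable R : realType.
Variable n : nat.

Lemma ell_sig (p q a c : 'I_n.+1) : p != q -> a != c ->
  (sigma R p q) 0 a - (sigma R p q) 0 c <= 2 /\
  ((sigma R p q) 0 a - (sigma R p q) 0 c = 2 -> p = a /\ q = c).
Proof.
move=> pq ac; rewrite !mxE !eqxx /=.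
case: (eqVneq a p) => [ap|ap]; case: (eqVneq a q) => [aq|aq];
case: (eqVneq c p) => [cp|cp]; case: (eqVneq c q) => [cq|cq] /=;
  try (by move: pq; rewrite -?ap -?aq -?cp -?cq eqxx);
  try (by move: ac; rewrite -?ap -?aq -?cp -?cq ?ap ?aq ?cp ?cq eqxx);
  (split; [clear pq ac ap aq cp cq; lra | move=> h; first [by split | exfalso; clear pq ac ap aq cp cq; lra]]).
Qed.

End Ell.


Lemma tri (V : zmodType) (x y z : V) : (x - y) + (y - z) + (z - x) = 0.
Proof. by rewrite -(addrA x) (addrA (- y)) addNr add0r -addrA (addrA (- z)) addNr add0r subrr. Qed.

Lemma wavg_eq (R : realType) k (w v : 'I_k -> R) M : (forall i, 0 <= w i) -> \sum_i w i = 1 ->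
  (forall i, v i <= M) -> \sum_i w i * v i = M -> exists i, w i != 0 /\ v i = M.
Proof.
move=> w0 w1 vM hs.
have h : \sum_i w i * (M - v i) = 0.
  rewrite (eq_bigr (fun i => w i * M - w i * v i)) => [|i _]; last by rewrite mulrBr.
  by rewrite sumrB -mulr_suml w1 mul1r hs subrr.
have z : forall i, w i * (M - v i) = 0.
  move=> i; apply: (psumr_eq0P (P := xpredT) _ h) => // j _.
  by apply: mulr_ge0 => //; rewrite subr_ge0.
have [i wi] : exists i, w i != 0.
  apply: NNPP => hw; move: w1; rewrite big1 => [/eqP|i _]; first by rewrite eq_sym oner_eq0.
  by apply/eqP; apply: contraT => wi; case: hw; exists i.
exists i; split => //; move: (z i) => /eqP; rewrite mulf_eq0 (negbTE wi) /= subr_eq0.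
by move=> /eqP.
Qed.

Lemma convhull_zero (R : realType) m (A : 'rV[R]_m -> Prop) x :
  (forall g, A g -> g = 0) -> convhull A x -> x = 0.
Proof.
move=> hA [k [p [w [Ap [_ [_ ->]]]]]]; apply: big1 => i _.
by rewrite (hA _ (Ap i)) scaler0.
Qed.

Lemma fano_nontriv (R : realType) m (Q : 'rV[R]_m -> Prop) : fano Q -> (0 < m)%N ->
  ~ (forall a, Q a -> a = 0).
Proof.
move=> [_ [[x [eps e0 hb]] _]] m0 h.
have A1 : x = 0 by apply: h; apply: hb => i; rewrite subrr normr0.
have A2 : x + (eps / 2) *: delta_mx 0 (Ordinal m0) = 0.
  apply: h; apply: hb => i; rewrite !mxE addrAC subrr add0r normrM.
  have he : `|eps / 2| = eps / 2 by rewrite ger0_norm //; lra.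
  rewrite he eqxx /=; case: (i == Ordinal m0); rewrite ?normr1 ?normr0 ?mulr1 ?mulr0; lra.
move: A2 => /(congr1 (fun v : 'rV[R]_m => v 0 (Ordinal m0))); rewrite A1 !mxE !eqxx /= add0r mulr1.
move=> h2; lra.
Qed.

Lemma linmapN (R : realType) m m' (f : 'rV[R]_m -> 'rV[R]_m') x : linM f -> f (- x) = - f x.
Proof. by move=> fl; rewrite -[- x]addr0 -scaleN1r fl (linmap0 fl) addr0 scaleN1r. Qed.

Section DirB.
Variables (R : realType) (n : nat) (E : rel 'I_n.+1).
Hypotheses (Esym : symmetric E) (Eirr : irreflexive E).
Variables (U : 'M[int]_n) (n1 n2 : nat) (e : (n1 + n2)%N = n)
  (P1 : 'rV[R]_n1 -> Prop) (P2 : 'rV[R]_n2 -> Prop).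
Hypotheses (hU : unimodular U) (hn1 : (0 < n1)%N) (hn2 : (0 < n2)%N) (f1 : fano P1) (f2 : fano P2).
Local Notation phi1 := (@phi R n.+1).
Let P : 'rV[R]_n -> Prop := sym_edge_polytope_H (R:=R) E.
Let U' : 'M[R]_n := map_mx intr U.
Let Union (z : 'rV[R]_n) := (exists2 a, P1 a & z = castmx (erefl 1%N, e) (row_mx a 0)) \/
                          (exists2 b, P2 b & z = castmx (erefl 1%N, e) (row_mx 0 b)).
Hypothesis hP : forall y, (exists2 x, P x & y = x *m U') <-> convhull Union y.

Let gensE (g : 'rV[R]_n.+1) := exists i j, E i j /\ (g = sigma R i j \/ g = - sigma R i j).

Lemma Uunit : U' \in unitmx.
Proof.
by rewrite unitmxE unitfE det_map_mx -normr_eq0 -intr_norm hU oner_eq0.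
Qed.

Definition Lam (w : 'rV[R]_n.+1) : 'rV[R]_(n1 + n2) := castmx (erefl 1%N, esym e) (pi_ w *m U').
Definition lo w := lsubmx (Lam w).
Definition hi w := rsubmx (Lam w).

Lemma Lam_lin : linM Lam.
Proof.
move=> a x y; rewrite /Lam pi_lin mulmxDl -scalemxAl.
by apply/rowP => k; rewrite !(castmxE, mxE).
Qed.
Lemma lo_lin : linM lo.
Proof. by move=> a x y; rewrite /lo Lam_lin; apply/rowP => k; rewrite !mxE. Qed.
Lemma hi_lin : linM hi.
Proof. by move=> a x y; rewrite /hi Lam_lin; apply/rowP => k; rewrite !mxE. Qed.

Lemma Lam_phi (x : 'rV[R]_n) : Lam (phi1 x) = castmx (erefl 1%N, esym e) (x *m U').
Proof. by rewrite /Lam phiK. Qed.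

Lemma Lam_inj (w : 'rV[R]_n.+1) : \sum_u w 0 u = 0 -> lo w = 0 -> hi w = 0 -> w = 0.
Proof.
move=> ws hl hh.
have L0 : Lam w = 0 by rewrite -[Lam w]hsubmxK -/(lo w) -/(hi w) hl hh row_mx0.
have : pi_ w *m U' = 0.
  by rewrite -[pi_ w *m U'](castmxK (erefl 1%N) (esym e)) -/(Lam w) L0; apply/rowP => k; rewrite !(castmxE, mxE).
move=> /(congr1 (mulmx^~ (invmx U'))); rewrite mulmxK ?Uunit // mul0mx => pw.
by rewrite -(piK ws) pw; apply/rowP => i; rewrite !mxE; case: ifP => _; rewrite /coord_nat ?big1 ?oppr0 //; [case: insub => // j; rewrite mxE | move=> j _; rewrite mxE].
Qed.

Lemma union_img z : Union z -> P (z *m invmx U') /\ z = (z *m invmx U') *m U'.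
Proof.
move=> hz; have [x Px zx] : exists2 x, P x & z = x *m U' by apply/hP; apply: convhull_in.
by rewrite zx mulmxK ?Uunit.
Qed.

Lemma lin_zero m (f : 'rV[R]_n.+1 -> 'rV[R]_m) : linM f ->
  (forall p q, E p q -> f (sigma R p q) = 0) -> forall x, P x -> f (phi1 x) = 0.
Proof.
move=> fl h x Px; have := convhull_lin fl Px; apply: convhull_zero.
move=> g [g' [p [q [Epq [->|->]]]] ->]; first exact: h.
by rewrite linmapN // h // oppr0.
Qed.

Lemma not_all_lo : ~ (forall p q, E p q -> lo (sigma R p q) = 0).
Proof.
move=> h; have L := lin_zero lo_lin h.
apply: (fano_nontriv f1 hn1) => a Pa.
have U1 : Union (castmx (erefl 1%N, e) (row_mx a 0)) by left; exists a.
have [Px zx] := union_img U1; have := L _ Px.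
by rewrite /lo Lam_phi -zx castmx_comp castmx_id row_mxKl.
Qed.

Lemma not_all_hi : ~ (forall p q, E p q -> hi (sigma R p q) = 0).
Proof.
move=> h; have L := lin_zero hi_lin h.
apply: (fano_nontriv f2 hn2) => a Pa.
have U1 : Union (castmx (erefl 1%N, e) (row_mx 0 a)) by right; exists a.
have [Px zx] := union_img U1; have := L _ Px.
by rewrite /hi Lam_phi -zx castmx_comp castmx_id row_mxKr.
Qed.

Lemma edge_class p q : E p q -> hi (sigma R p q) = 0 \/ lo (sigma R p q) = 0.
Proof.
move=> Epq; have pq : p != q by apply: contraTneq Epq => ->; rewrite Eirr.
set s := sigma R p q.
have phxs : phi1 (pi_ s) = s := piK (sigma_sum R p q).
set xs := pi_ s in phxs *.
have Pxs : P xs by rewrite /P /sym_edge_polytope_H phxs; apply: convhull_in; exists p, q; split => //; left.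
have : convhull Union (xs *m U') by apply/hP; exists xs.
move=> [k [pts [w [Upts [w0 [w1 zE]]]]]].
pose xi i := pts i *m invmx U'.
have Pxi : forall i, P (xi i) by move=> i; exact: (union_img (Upts i)).1.
have ptsE : forall i, pts i = xi i *m U' by move=> i; exact: (union_img (Upts i)).2.
have sumx : \sum_i w i *: xi i = xs.
  rewrite /xi (eq_bigr (fun i => (w i *: pts i) *m invmx U')); last by move=> i _; rewrite scalemxAl.
  by rewrite -mulmx_suml -zE mulmxK ?Uunit.
pose L x := (phi1 x) 0 p - (phi1 x) 0 q.
have Llin : linF L.
  by move=> a x y; rewrite /L phi_lin !mxE; ring.
have gb : forall g, gensE g -> g 0 p - g 0 q <= 2 /\ (g 0 p - g 0 q = 2 -> g = s).
  move=> g [i [j [Eij hg]]]; have ij : i != j by apply: contraTneq Eij => ->; rewrite Eirr.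
  case: hg => ->.
    by have [h1 h2] := ell_sig R ij pq; split => // /h2 [-> ->].
  rewrite /sigma opprB -/(sigma R j i); rewrite eq_sym in ij.
  by have [h1 h2] := ell_sig R ij pq; split => // /h2 [-> ->].
have bound : forall x, P x -> L x <= 2.
  move=> x Px; apply: (conv_le (l := fun g => g 0 p - g 0 q)) Px; first by move=> a y z; rewrite !mxE; ring.
  by move=> g /gb [].
have eq2 : forall x, P x -> L x = 2 -> x = xs.
  move=> x Px Lx; rewrite -(phiK x) /xs; congr pi_.
  apply: (conv_eq (l := fun g => g 0 p - g 0 q) (M := 2)) Px Lx; first by move=> a y z; rewrite !mxE; ring.
    by move=> g /gb [].
  by move=> g /gb [].
have Lxs : L xs = 2.
  by rewrite /L phxs /s !mxE !eqxx (negbTE pq) eq_sym (negbTE pq) /=; ring.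
have hsum : \sum_i w i * L (xi i) = 2 by rewrite -linF_sum // sumx.
have [i [wi Li]] := wavg_eq (v := fun i => L (xi i)) w0 w1 (fun i => bound _ (Pxi i)) hsum.
have xiE := eq2 _ (Pxi i) Li.
have LamE : Lam s = castmx (erefl 1%N, esym e) (pts i) by rewrite /Lam -/xs ptsE xiE.
case: (Upts i) => [[a _ ha]|[a _ ha]].
  by left; rewrite /hi LamE ha castmx_comp castmx_id row_mxKr.
by right; rewrite /lo LamE ha castmx_comp castmx_id row_mxKl.
Qed.

Lemma linMD m m' (f : 'rV[R]_m -> 'rV[R]_m') x y : linM f -> f (x + y) = f x + f y.
Proof. by move=> fl; have := fl 1 x y; rewrite !scale1r. Qed.

Lemma sigmaN (x y : 'I_n.+1) : sigma R y x = - sigma R x y.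
Proof. by rewrite /sigma opprB. Qed.

Lemma hi_sym x y : hi (sigma R x y) = 0 -> hi (sigma R y x) = 0.
Proof. by move=> h; rewrite sigmaN (linmapN _ hi_lin) h oppr0. Qed.
Lemma lo_sym x y : lo (sigma R x y) = 0 -> lo (sigma R y x) = 0.
Proof. by move=> h; rewrite sigmaN (linmapN _ lo_lin) h oppr0. Qed.

Lemma dirB_main : connected_graph E -> two_connected E -> False.
Proof.
move=> Econn [_ h2].
have [p1 [q1 [E1 c1]]] : exists p q, E p q /\ hi (sigma R p q) = 0.
  apply: NNPP => hn; apply: not_all_lo => p q Epq; apply: NNPP => hl.
  case: (edge_class Epq) => // hh; apply: hn; by exists p, q.
have [p2 [q2 [E2 c2]]] : exists p q, E p q /\ lo (sigma R p q) = 0.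
  apply: NNPP => hn; apply: not_all_hi => p q Epq; apply: NNPP => hl.
  case: (edge_class Epq) => // hh; apply: hn; by exists p, q.
have [v [a [c [Eva [Evc [ha hc]]]]]] : exists v a c, E v a /\ E v c /\
    hi (sigma R v a) = 0 /\ lo (sigma R v c) = 0.
  apply: NNPP => hn.
  pose X u := exists a, E u a /\ hi (sigma R u a) = 0.
  have Xcl : forall x z, connect E x z -> X x -> X z.
    apply: connect_ind => // x y z Exy IH [a [Exa hxa]]; apply: IH.
    case: (edge_class Exy) => hxy; first by exists x; rewrite Esym Exy hi_sym.
    by case: hn; exists x, a, y.
  have [a [Ea ha]] := Xcl _ _ (Econn p1 p2) (ex_intro _ q1 (conj E1 c1)).
  by apply: hn; exists p2, a, q2.
have av : a != v by apply: contraTneq Eva => ->; rewrite Eirr.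
have cv : c != v by apply: contraTneq Evc => ->; rewrite Eirr.
have gen : forall x z, connect (delete_vertex E v) x z -> exists S1 S2 : 'rV[R]_n.+1, hi S1 = 0 /\ lo S2 = 0 /\
    S1 0 v = 0 /\ \sum_u S1 0 u = 0 /\ S1 + S2 = sigma R x z.
  apply: connect_ind.
    move=> x; exists 0, 0; rewrite /sigma subrr addr0 (linmap0 hi_lin) (linmap0 lo_lin).
    by split => //; split => //; split; [rewrite mxE | split => //; rewrite big1 // => u _; rewrite mxE].
  move=> x y z /and3P[Exy xv yv] [S1 [S2 [h1 [h2' [h3 [h4 h5]]]]]].
  have sxyz : sigma R x z = sigma R x y + (S1 + S2).
    by rewrite h5 /sigma addrA subrK.
  have sv : sigma R x y 0 v = 0.
    by rewrite !mxE /= eq_sym (negbTE xv) eq_sym (negbTE yv) subrr.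
  have ss : \sum_u sigma R x y 0 u = 0 by apply: sigma_sum.
  case: (edge_class Exy) => hxy.
    exists (sigma R x y + S1), S2; rewrite (linMD _ _ hi_lin) hxy h1 addr0; split => //.
    split => //; split; first by rewrite mxE sv h3 addr0.
    split; last by rewrite sxyz addrA.
    by rewrite (eq_bigr (fun u => sigma R x y 0 u + S1 0 u)) ?big_split /= ?ss ?h4 ?addr0 // => u _; rewrite mxE.
  exists S1, (sigma R x y + S2); rewrite (linMD _ _ lo_lin) hxy h2' addr0; split => //.
  split => //; split => //; split => //.
  by rewrite sxyz addrCA.
have [S1 [S2 [h1 [h2' [h3 [h4 h5]]]]]] := gen _ _ (h2 v a c av cv).
set T := sigma R v a + S1.
have hiT : hi T = 0 by rewrite /T (linMD _ _ hi_lin) ha h1 addr0.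
have TE : T = - (S2 + sigma R c v).
  apply/eqP; rewrite -addr_eq0 /T addrA -(addrA _ S1) h5 /sigma; apply/eqP.
  exact: tri.
have loT : lo T = 0.
  by rewrite TE (linmapN _ lo_lin) (linMD _ _ lo_lin) h2' (lo_sym hc) addr0 oppr0.
have sT : \sum_u T 0 u = 0.
  rewrite (eq_bigr (fun u => sigma R v a 0 u + S1 0 u)) => [|u _]; last by rewrite mxE.
  by rewrite big_split /= sigma_sum h4 addr0.
have := Lam_inj sT loT hiT; move/(congr1 (fun M : 'rV[R]_n.+1 => M 0 v)).
rewrite /T !mxE h3 !eqxx /= eq_sym (negbTE av) subr0 addr0 => /eqP.
by rewrite oner_eq0.
Qed.

End DirB.

Lemma dirB (R : realType) n (E : rel 'I_n.+1) : simple_graph E -> connected_graph E ->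
  two_connected E -> ~ splits (sym_edge_polytope_H (R:=R) E).
Proof.
move=> [Esym Eirr] Ec h2 [U [n1 [n2 [e [P1 [P2 [hU [hn1 [hn2 [f1 [f2 hP]]]]]]]]]]].
exact: (dirB_main Esym Eirr hU hn1 hn2 f1 f2 hP Ec h2).
Qed.


Lemma int_mul1 (a b : int) : a * b = 1 -> `|a| = 1.
Proof.
move=> h; have : (absz a * absz b)%N = 1%N by rewrite -abszM h.
by move/eqP; rewrite muln_eq1 => /andP[/eqP ha _]; rewrite -abszE ha.
Qed.

Section DirA.
Variables (R : realType) (n : nat) (E : rel 'I_n.+1).
Hypotheses (Esym : symmetric E) (Eirr : irreflexive E) (Econn : connected_graph E).
Variables (v i j : 'I_n.+1) (A B : {set 'I_n.+1}).
Hypotheses (vA : v \notin A) (vB : v \notin B) (ABd : forall u, u \in A -> u \notin B)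
  (cov : forall u, u != v -> (u \in A) || (u \in B)) (iA : i \in A) (jB : j \in B)
  (cA : forall x y, x \in A -> E x y -> y != v -> y \in A)
  (cB : forall x y, x \in B -> E x y -> y != v -> y \in B).
Local Notation phi1 := (@phi R n.+1).

Definition GX (X : {set 'I_n.+1}) u w := [&& E u w, u \in v |: X & w \in v |: X].

Lemma GX_sym X : symmetric (GX X).
Proof. by move=> u w; rewrite /GX Esym; case: (E w u) => /=; [rewrite andbC|]. Qed.

Lemma GX_conn (X : {set 'I_n.+1}) : v \notin X -> (forall x y, x \in X -> E x y -> y != v -> y \in X) ->
  forall x, x \in X -> connect (GX X) x v.
Proof.
move=> vX cX x xX.
have gen : forall x z, connect E x z -> x \in X -> z = v -> connect (GX X) x z.
  apply: connect_ind => [x' _ _|x' y z Exy IH x'X zv]; first exact: connect0.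
  have Gxy : y \in v |: X -> GX X x' y by move=> hy; rewrite /GX Exy hy in_setU1 x'X orbT.
  have [yv|yv] := eqVneq y v.
    by rewrite zv -yv; apply: connect1; apply: Gxy; rewrite yv setU11.
  have yX := cX _ _ x'X Exy yv.
  apply: (connect_trans (connect1 (Gxy _)) (IH yX zv)).
  by rewrite in_setU1 yX orbT.
exact: gen (Econn x v) xX (erefl v).
Qed.

Lemma A_gt0 : (0 < #|A|)%N. Proof. by apply/card_gt0P; exists i. Qed.
Lemma B_gt0 : (0 < #|B|)%N. Proof. by apply/card_gt0P; exists j. Qed.

Definition bv (X : {set 'I_n.+1}) (x0 : 'I_n.+1) (h : x0 \in X) (u : 'I_n.+1) : 'rV[R]_#|X| :=
  if u \in X then delta_mx 0 (enum_rank_in h u) else 0.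

Lemma bv_fano (X : {set 'I_n.+1}) x0 (h : x0 \in X) : v \notin X ->
  (forall x y, x \in X -> E x y -> y != v -> y \in X) -> fano (gpoly (GX X) (bv h)).
Proof.
move=> vX cX; apply: gpoly_fano.
- exact: GX_sym.
- by move=> u k; rewrite /bv; case: (u \in X); rewrite mxE; [case: (_ && _); [right|left] | left].
- move=> k; exists (enum_val k), v; split; last by apply: GX_conn => //; apply: enum_valP.
  by rewrite /bv enum_valP (negbTE vX) subr0 enum_valK_in.
- by apply/card_gt0P; exists x0.
Qed.

Lemma card_AB : (#|A| + #|B|)%N = n.
Proof.
have h1 : [set~ v] :&: A = A.
  by apply/setP => u; rewrite !inE; case: eqP => // ->; rewrite (negbTE vA).
have h2 : [set~ v] :\: A = B.
  apply/setP => u; rewrite !inE; apply/idP/idP.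
    by move=> /andP[uA uv]; move: (cov uv); rewrite (negbTE uA).
  move=> uB; rewrite (contraTN (ABd (u:=u)) _) ?negbK //=.
  by apply: contraTneq uB => ->.
by rewrite -{1}h1 -h2 cardsID cardsC1 card_ord.
Qed.

Definition gmap (s : 'I_(#|A| + #|B|)) : 'I_n.+1 :=
  match split s with inl t => enum_val t | inr t => enum_val t end.
Definition fmap (k : 'I_n) : 'I_n.+1 := gmap (cast_ord (esym card_AB) k).
Definition ginv (u : 'I_n.+1) : 'I_(#|A| + #|B|) :=
  if u \in A then lshift _ (enum_rank_in iA u) else rshift _ (enum_rank_in jB u).

Lemma gmap_neq s : gmap s != v.
Proof.
rewrite /gmap; case: (split s) => t.
  by apply: contraTneq (enum_valP t) => ->.
by apply: contraTneq (enum_valP t) => ->.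
Qed.

Lemma gmapK u : u != v -> gmap (ginv u) = u.
Proof.
move=> uv; rewrite /ginv /gmap; case: ifP => uA.
  by rewrite split_lsh enum_rankK_in.
have uB : u \in B by move: (cov uv); rewrite uA.
by rewrite split_rsh enum_rankK_in.
Qed.

Lemma ginvK s : ginv (gmap s) = s.
Proof.
rewrite /ginv /gmap -[s in RHS]splitK; case: (split s) => t /=.
  by rewrite enum_valP enum_valK_in.
by rewrite (negbTE (contraTN (ABd (u := enum_val t)) _)) ?negbK ?enum_valP // enum_valK_in.
Qed.

Lemma fmap_neq k : fmap k != v. Proof. exact: gmap_neq. Qed.

Lemma sum_fmap (V : zmodType) (F : 'I_n.+1 -> V) :
  \sum_(u | u != v) F u = \sum_l F (fmap l).
Proof.
rewrite (reindex fmap); first by apply: eq_bigl => l; rewrite fmap_neq.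
exists (fun u => cast_ord card_AB (ginv u)).
  by move=> l _; rewrite /fmap ginvK cast_ordKV.
by move=> u; rewrite inE => uv; rewrite /fmap cast_ordK gmapK.
Qed.

Definition Um (Rg : pzRingType) : 'M[Rg]_n :=
  \matrix_(k, l) (if (fmap l < n)%N then ((k : nat) == fmap l)%:R else -1).
Definition Vm (Rg : pzRingType) : 'M[Rg]_n :=
  \matrix_(l, k) (if (k : nat) == v then -1 else ((fmap l : nat) == k)%:R).

Lemma UV (Rg : comPzRingType) : Um Rg *m Vm Rg = 1%:M.
Proof.
apply/matrixP => k k'; rewrite !mxE.
pose Uu (u : 'I_n.+1) : Rg := if (u < n)%N then ((k : nat) == u)%:R else -1.
pose Vu (u : 'I_n.+1) : Rg := if (k' : nat) == v then -1 else ((u : nat) == k')%:R.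
rewrite (eq_bigr (fun l => Uu (fmap l) * Vu (fmap l))); last by move=> l _; rewrite !mxE.
rewrite -(sum_fmap (fun u => Uu u * Vu u)).
have Usum : \sum_u Uu u = 0.
  rewrite big_ord_recr /= (bigD1 k) //= big1 => [|u hu]; last first.
    rewrite /Uu /= ltn_ord; case: eqP => // ku; case/eqP: hu; apply: val_inj => /=; by rewrite ku.
  by rewrite /Uu /= ltn_ord ltnn eqxx addr0 subrr.
rewrite /Vu; case: eqP => kv.
  rewrite (eq_bigr (fun u => - Uu u)); last by move=> u _; rewrite mulrN1.
  rewrite sumrN; have := Usum; rewrite (bigD1 v) //= => /eqP; rewrite addrC addr_eq0 => /eqP ->.
  by rewrite opprK /Uu -kv ltn_ord.
have wv : widen_ord (leqnSn n) k' != v by apply/eqP => h; apply: kv; rewrite -h.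
rewrite (bigD1 (widen_ord (leqnSn n) k')) //= eqxx mulr1 big1 ?addr0.
  by rewrite /Uu /= ltn_ord.
move=> u /andP[_ hu]; case: eqP => [h|]; last by rewrite mulr0.
by case/eqP: hu; apply: val_inj; rewrite /= -h.
Qed.

Lemma Um_unimod : unimodular (Um int).
Proof.
apply: (@int_mul1 _ (\det (Vm int))); by rewrite -det_mulmx UV det1.
Qed.

Lemma bv_entry (X : {set 'I_n.+1}) x0 (h : x0 \in X) u t : (bv h u : 'rV[R]_#|X|) 0 t = (enum_val t == u)%:R.
Proof.
rewrite /bv; case: ifP => uX; rewrite mxE //=.
  have [ht|ht] := eqVneq t (enum_rank_in h u); first by rewrite ht enum_rankK_in // eqxx.
  by case: eqP => // hu; case/eqP: ht; rewrite -hu enum_valK_in.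
by case: eqP => // ht; move: uX; rewrite -ht enum_valP.
Qed.

Local Notation b1 := (bv iA).
Local Notation b2 := (bv jB).

Definition Lf (w : 'rV[R]_n.+1) : 'rV[R]_n := \row_l w 0 (fmap l).
Definition emb1 (a : 'rV[R]_#|A|) : 'rV[R]_n := castmx (erefl 1%N, card_AB) (row_mx a 0).
Definition emb2 (b : 'rV[R]_#|B|) : 'rV[R]_n := castmx (erefl 1%N, card_AB) (row_mx 0 b).

Lemma Lf_lin : linM Lf. Proof. by move=> a x y; apply/rowP => l; rewrite !mxE. Qed.
Lemma emb1_lin : linM emb1.
Proof.
move=> a x y; apply/rowP => l; rewrite !(castmxE, mxE) /=.
by rewrite -[cast_ord _ l]splitK; case: (split _) => t /=; rewrite ?row_mxEl ?row_mxEr !mxE ?mulr0 ?addr0.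
Qed.
Lemma emb2_lin : linM emb2.
Proof.
move=> a x y; apply/rowP => l; rewrite !(castmxE, mxE) /=.
by rewrite -[cast_ord _ l]splitK; case: (split _) => t /=; rewrite ?row_mxEl ?row_mxEr !mxE ?mulr0 ?addr0.
Qed.

Lemma B_notvA u : u \in B -> u \notin v |: A.
Proof.
move=> uB; rewrite in_setU1 negb_or; apply/andP; split; first by apply: contraTneq uB => ->.
by apply: contraTN uB => /ABd.
Qed.
Lemma A_notvB u : u \in A -> u \notin v |: B.
Proof.
move=> uA; rewrite in_setU1 negb_or; apply/andP; split; first by apply: contraTneq uA => ->.
exact: ABd.
Qed.

Lemma Lf_sig1 p q : p \in v |: A -> q \in v |: A -> Lf (sigma R p q) = emb1 (b1 p - b1 q).
Proof.
move=> hp hq; apply/rowP => l; rewrite castmxE [Lf _ _ _]mxE /= /fmap.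
move: (cast_ord _ l) => s; rewrite -[s]splitK; case: (split s) => t /=.
  by rewrite row_mxEl /gmap split_lsh !mxE !cast_ord_id !bv_entry.
rewrite row_mxEr /gmap split_rsh !mxE.
have tB := enum_valP t.
have e1 : (enum_val t == p) = false by apply: contraTF hp => /eqP <-; apply: B_notvA.
have e2 : (enum_val t == q) = false by apply: contraTF hq => /eqP <-; apply: B_notvA.
by rewrite e1 e2 andbF subrr.
Qed.

Lemma Lf_sig2 p q : p \in v |: B -> q \in v |: B -> Lf (sigma R p q) = emb2 (b2 p - b2 q).
Proof.
move=> hp hq; apply/rowP => l; rewrite castmxE [Lf _ _ _]mxE /= /fmap.
move: (cast_ord _ l) => s; rewrite -[s]splitK; case: (split s) => t /=.
  rewrite row_mxEl /gmap split_lsh mxE.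
  have tA := enum_valP t.
  have e1 : (enum_val t == p) = false by apply: contraTF hp => /eqP <-; apply: A_notvB.
  have e2 : (enum_val t == q) = false by apply: contraTF hq => /eqP <-; apply: A_notvB.
  by rewrite !mxE e1 e2 andbF subrr.
by rewrite row_mxEr /gmap split_rsh !mxE !cast_ord_id !bv_entry.
Qed.

Lemma UmapE : map_mx intr (Um int) = Um R.
Proof. by apply/matrixP => k l; rewrite !mxE; case: ifP => _; rewrite ?rmorphN1 ?rmorph_nat. Qed.

Lemma UmE (x : 'rV[R]_n) : x *m Um R = Lf (phi1 x).
Proof.
apply/rowP => l; rewrite !mxE.
case: ifP => hl.
  rewrite (bigD1 (Ordinal hl)) //= big1 => [|k hk]; last first.
    rewrite mxE hl; case: eqP => [h|]; last by rewrite mulr0.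
    by case/eqP: hk; apply: val_inj.
  by rewrite mxE hl eqxx mulr1 addr0 /coord_nat insubT.
rewrite (eq_bigr (fun k => - x 0 k)); first by rewrite sumrN.
by move=> k _; rewrite mxE hl mulrN1.
Qed.

Let P : 'rV[R]_n -> Prop := sym_edge_polytope_H (R:=R) E.
Let gensE (g : 'rV[R]_n.+1) := exists i j, E i j /\ (g = sigma R i j \/ g = - sigma R i j).
Let U' : 'M[R]_n := map_mx intr (Um int).
Let Union (z : 'rV[R]_n) := (exists2 a, gpoly (GX A) b1 a & z = emb1 a) \/
                            (exists2 b, gpoly (GX B) b2 b & z = emb2 b).
Let I y := exists2 x, P x & y = x *m U'.

Lemma edge_side p q : E p q ->
  (p \in v |: A /\ q \in v |: A) \/ (p \in v |: B /\ q \in v |: B).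
Proof.
move=> Epq; rewrite !in_setU1.
have [pv'|pv] := eqVneq p v.
  rewrite pv' in Epq *.
  have qv : q != v by apply/eqP => qv'; move: Epq; rewrite qv' Eirr.
  by case/orP: (cov qv) => ->; [left|right]; rewrite ?orbT.
have [qv'|qv] := eqVneq q v; first by rewrite qv'; case/orP: (cov pv) => ->; [left|right]; rewrite ?eqxx ?orbT.
case/orP: (cov pv) => hp; [left|right]; rewrite hp ?orbT; split => //.
  by rewrite (cA hp Epq qv) orbT.
by rewrite (cB hp Epq qv) orbT.
Qed.

Lemma I_conv y y' t : 0 <= t <= 1 -> I y -> I y' -> I (t *: y + (1 - t) *: y').
Proof.
move=> ht [x Px ->] [x' Px' ->]; exists (t *: x + (1 - t) *: x').
  rewrite /P /sym_edge_polytope_H phi_lin.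
  have -> : phi1 ((1 - t) *: x') = (1 - t) *: phi1 x'.
    by rewrite -[_ *: x']addr0 phi_lin (linmap0 (@phi_lin R n)) addr0.
  exact: convhull_conv2.
by rewrite mulmxDl -!scalemxAl.
Qed.

Lemma I_sig p q : E p q -> I (Lf (sigma R p q)).
Proof.
move=> Epq; exists (pi_ (sigma R p q)).
  rewrite /P /sym_edge_polytope_H piK ?sigma_sum //; apply: convhull_in.
  by exists p, q; split => //; left.
by rewrite /U' UmapE UmE piK ?sigma_sum.
Qed.

Lemma img_eq y : (exists2 x, P x & y = x *m U') <-> convhull Union y.
Proof.
split.
  move=> [x Px ->]; rewrite /U' UmapE UmE.
  have := convhull_lin Lf_lin Px; apply: convhull_sub => z [g [p [q [Epq hg]]] ->].
  have [p' [q' [Epq' ->]]] : exists p' q', E p' q' /\ g = sigma R p' q'.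
    case: hg => ->; first by exists p, q.
    by exists q, p; rewrite Esym /sigma opprB.
  case: (edge_side Epq') => [[hp hq]|[hp hq]].
    left; exists (b1 p' - b1 q'); last by rewrite Lf_sig1.
    by apply: convhull_in; exists p', q'; rewrite /GX Epq' hp hq.
  right; exists (b2 p' - b2 q'); last by rewrite Lf_sig2.
  by apply: convhull_in; exists p', q'; rewrite /GX Epq' hp hq.
move=> h; apply: (convhull_convex I_conv); apply: (convhull_sub _ h) => z [[a Pa ->]|[b Pb ->]].
  apply: (convhull_convex I_conv); have := convhull_lin emb1_lin Pa.
  apply: convhull_sub => z' [g [p [q [Gpq ->]]] ->].
  move: Gpq => /and3P[Epq hp hq]; rewrite -Lf_sig1 //; exact: I_sig.
apply: (convhull_convex I_conv); have := convhull_lin emb2_lin Pb.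
apply: convhull_sub => z' [g [p [q [Gpq ->]]] ->].
move: Gpq => /and3P[Epq hp hq]; rewrite -Lf_sig2 //; exact: I_sig.
Qed.

Lemma splitsA : splits P.
Proof.
exists (Um int), #|A|, #|B|, card_AB, (gpoly (GX A) b1), (gpoly (GX B) b2).
split; first exact: Um_unimod.
split; first exact: A_gt0.
split; first exact: B_gt0.
split; first exact: bv_fano.
split; first exact: bv_fano.
exact: img_eq.
Qed.

End DirA.


Lemma dv_conn n (E : rel 'I_n.+1) v x z : connect (delete_vertex E v) x z -> x != v -> z != v.
Proof.
move: x z; apply: connect_ind => // x y z /and3P[_ _ yv] IH _; exact: IH.
Qed.

Lemma dirA (R : realType) n (E : rel 'I_n.+1) : simple_graph E -> connected_graph E ->
  ~ two_connected E -> splits (sym_edge_polytope_H (R:=R) E).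
Proof.
move=> [Esym Eirr] Ec ntc.
have [v [i [j [iv [jv nc]]]]] : exists v i j, i != v /\ j != v /\
    ~ connect (delete_vertex E v) i j.
  apply: NNPP => h; apply: ntc; split => // v i j iv jv; apply: NNPP => hc.
  by apply: h; exists v, i, j.
pose A := [set u | connect (delete_vertex E v) i u].
pose B := [set u | (u != v) && (u \notin A)].
have vA : v \notin A by rewrite inE; apply/negP => /dv_conn /(_ iv); rewrite eqxx.
have vB : v \notin B by rewrite inE eqxx.
have ABd : forall u, u \in A -> u \notin B by move=> u uA; rewrite inE uA andbF.
have cov : forall u, u != v -> (u \in A) || (u \in B).
  by move=> u uv; rewrite [u \in B]inE uv /=; case: (u \in A).
have iA : i \in A by rewrite inE connect0.
have jB : j \in B by rewrite inE jv /= inE; apply/negP.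
have cA : forall x y, x \in A -> E x y -> y != v -> y \in A.
  move=> x y xA Exy yv; move: (xA); rewrite !inE => cx.
  have xv : x != v by apply: contraTneq xA => ->.
  by apply: (connect_trans cx); apply: connect1; rewrite /delete_vertex Exy xv yv.
have cB : forall x y, x \in B -> E x y -> y != v -> y \in B.
  move=> x y xB Exy yv; rewrite inE yv /=; apply/negP => yA.
  have xv : x != v by apply: contraTneq xB => ->.
  by move: (ABd _ (cA _ _ yA (etrans (Esym y x) Exy) xv)); rewrite xB.
exact: (splitsA R Esym Eirr Ec vA vB ABd cov iA jB cA cB).
Qed.

Theorem lemma3p3 (R : realType) (d : nat) (E : rel 'I_d) :
  (2 <= d)%N -> simple_graph E -> connected_graph E ->
  (~ splits (sym_edge_polytope_H (R:=R) E) <-> two_connected E).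
Proof.
case: d E => [|n] E // _ hs hc; split.
  by move=> hns; apply: NNPP => ht; apply: hns; apply: dirA.
exact: dirB.
Qed.
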